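(* Let $A,E\in\mathbb{R}^{n\times m}$, $\widetilde A=A+E$, $1\le r<\min\{n,m\}$, with full SVDs $A=U\Sigma V^T$ and $\widetilde A=\widetilde U\widetilde\Sigma\widetilde V^T$, and let $A_r=U_1\Sigma_1V_1^T$, $\widetilde A_r=\widetilde U_1\widetilde\Sigma_1\widetilde V_1^T$. Then \[A_r-\widetilde A_r=U\begin{pmatrix}-U_1^TE\widetilde V_1 & -U_1^TE\widetilde V_2\\ -U_2^TAV_2V_2^T\widetilde V_1 & 0\end{pmatrix}\widetilde V^T+U\begin{pmatrix}0 & U_1^T\widetilde U_2\widetilde U_2^T\widetilde A\widetilde V_2\\ -U_2^TE\widetilde V_1 & 0\end{pmatrix}\widetilde V^T.\]
   Context: In the full SVDs, $U,\widetilde U\in\mathbb{R}^{n\times n}$ and $V,\widetilde V\in\mathbb{R}^{m\times m}$ are orthogonal and the singular values are in nonincreasing order. $U=(U_1\ U_2)$, $\widetilde U=(\widetilde U_1\ \widetilde U_2)$ with $U_1,\widetilde U_1\in\mathbb{R}^{n\times r}$; $V=(V_1\ V_2)$, $\widetilde V=(\widetilde V_1\ \widetilde V_2)$ with $V_1,\widetilde V_1\in\mathbb{R}^{m\times r}$; $\Sigma_1,\widetilde\Sigma_1$ are the $r\times r$ diagonal matrices of the $r$ largest singular values of $A$ and $\widetilde A$. *)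

(* Defs.v *)
From mathcomp Require Import all_boot all_order all_algebra.
From mathcomp Require Import all_reals.
Set Implicit Arguments. Unset Strict Implicit. Unset Printing Implicit Defensive.
Import Order.TTheory GRing.Theory Num.Theory.
Local Open Scope ring_scope.

Definition orthogonal_mx (R : realType) (k : nat) (Q : 'M[R]_k) : Prop :=
  Q^T *m Q = 1%:M.

Definition svd_sigma (R : realType) (k l : nat) (S : 'M[R]_(k, l)) : Prop :=
  [/\ forall (i : 'I_k) (j : 'I_l), (i : nat) <> j -> S i j = 0,
      forall (i : 'I_k) (j : 'I_l), (i : nat) = j -> 0 <= S i j
    & forall (i i' : 'I_k) (j j' : 'I_l),
        (i : nat) = j -> (i' : nat) = j' -> (i <= i')%N -> S i' j' <= S i j].

Definition is_full_svd (R : realType) (k l : nat) (M : 'M[R]_(k, l))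
  (Q : 'M[R]_k) (S : 'M[R]_(k, l)) (P : 'M[R]_l) : Prop :=
  [/\ orthogonal_mx Q, orthogonal_mx P, svd_sigma S & M = Q *m S *m P^T].

(* Main.v *)
Require Import Defs.
From mathcomp Require Import all_boot all_order all_algebra.
From mathcomp Require Import all_reals.
From mathcomp Require Import zify.
Import Order.TTheory GRing.Theory Num.Theory.
Local Open Scope ring_scope.
Set Implicit Arguments. Unset Strict Implicit.

Lemma orth_split (R : realType) r p (U : 'M[R]_(r + p)) :
  U^T *m U = 1%:M ->
  [/\ (lsubmx U)^T *m lsubmx U = 1%:M, (lsubmx U)^T *m rsubmx U = 0,
      (rsubmx U)^T *m lsubmx U = 0 & (rsubmx U)^T *m rsubmx U = 1%:M].
Proof.
move=> h; move: h; rewrite -{1 2}[U](hsubmxK U) tr_row_mx mul_col_row scalar_mx_block.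
by case/eq_block_mx.
Qed.

Lemma sigma_split (R : realType) r p q (S : 'M[R]_(r + p, r + q)) :
  svd_sigma S -> ursubmx S = 0 /\ dlsubmx S = 0.
Proof.
case=> hd _ _; split; apply/matrixP => i j; rewrite !mxE hd //=.
  by move=> /= e; have := ltn_ord i; rewrite e; lia.
by move=> /= e; have := ltn_ord j; rewrite -e; lia.
Qed.

Lemma svd_split (R : realType) r p q (A : 'M[R]_(r + p, r + q)) U S V :
  is_full_svd A U S V ->
  A = lsubmx U *m ulsubmx S *m (lsubmx V)^T + rsubmx U *m drsubmx S *m (rsubmx V)^T.
Proof.
case=> _ _ hs ->; have [h1 h2] := sigma_split hs.
rewrite -{1}[U](hsubmxK U) -{1}[S](submxK S) -{1}[V](hsubmxK V) h1 h2.
by rewrite mul_row_block tr_row_mx mul_row_col !mulmx0 addr0 add0r.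
Qed.

Lemma rcancel (R : realType) a b c (P : 'M[R]_(a, b)) (Q : 'M[R]_(a, c)) C :
  P^T *m Q = C -> forall k (X : 'M[R]_(k, b)), X *m P^T *m Q = X *m C.
Proof. by move=> h k X; rewrite -mulmxA h. Qed.

Theorem lemma3p18 (R : realType) (r p q : nat)
  (A E : 'M[R]_(r + p, r + q))
  (U Ut : 'M[R]_(r + p)) (V Vt : 'M[R]_(r + q)) (S St : 'M[R]_(r + p, r + q)) :
  (1 <= r)%N -> (0 < p)%N -> (0 < q)%N ->
  is_full_svd A U S V ->
  is_full_svd (A + E) Ut St Vt ->
  let At := A + E in
  let U1 := lsubmx U in let U2 := rsubmx U in
  let V1 := lsubmx V in let V2 := rsubmx V in
  let Ut1 := lsubmx Ut in let Ut2 := rsubmx Ut in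
  let Vt1 := lsubmx Vt in let Vt2 := rsubmx Vt in
  let Ar := U1 *m ulsubmx S *m V1^T in
  let Atr := Ut1 *m ulsubmx St *m Vt1^T in
  Ar - Atr =
    U *m block_mx (- (U1^T *m E *m Vt1)) (- (U1^T *m E *m Vt2))
                  (- (U2^T *m A *m V2 *m V2^T *m Vt1)) 0 *m Vt^T
  + U *m block_mx 0 (U1^T *m Ut2 *m Ut2^T *m At *m Vt2)
                  (- (U2^T *m E *m Vt1)) 0 *m Vt^T.
Proof.
move=> _ _ _ hA hAt At U1 U2 V1 V2 Ut1 Ut2 Vt1 Vt2 Ar Atr.
have eA := svd_split hA; have eAt := svd_split hAt.
case: hA => hU hV _ _; case: hAt => hUt hVt _ _.
have hUU : U *m U^T = 1%:M by apply: mulmx1C.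
have hVV : Vt *m Vt^T = 1%:M by apply: mulmx1C.
have [u11 u12 u21 u22] := orth_split hU.
have [v11 v12 v21 v22] := orth_split hV.
have [w11 w12 w21 w22] := orth_split hUt.
have [z11 z12 z21 z22] := orth_split hVt.
have eU : U = row_mx U1 U2 by rewrite hsubmxK.
have eVt : Vt = row_mx Vt1 Vt2 by rewrite hsubmxK.
rewrite -mulmxDl -mulmxDr add_block_mx.
have -> : Ar - Atr = U *m (U^T *m (Ar - Atr) *m Vt) *m Vt^T.
  by rewrite !mulmxA hUU mul1mx -mulmxA hVV mulmx1.
congr (_ *m _ *m _).
rewrite eU eVt tr_row_mx mul_col_mx mul_col_row.
have eE : E = (A + E) - A by rewrite addrC addKr.
rewrite eAt in eE.
move: eAt eE eA u11 u12 u21 u22 v11 v12 v21 v22 w11 w12 w21 w22 z11 z12 z21 z22.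
rewrite /Ar /Atr /At -/U1 -/U2 -/V1 -/V2 -/Ut1 -/Ut2 -/Vt1 -/Vt2.
clearbody Ar Atr At U1 U2 V1 V2 Ut1 Ut2 Vt1 Vt2.
move=> -> -> -> u11 u12 u21 u22 v11 v12 v21 v22 w11 w12 w21 w22 z11 z12 z21 z22.
congr block_mx;
rewrite !(mulmxDr, mulmxBr, mulmxDl, mulmxBl, mulmxN, mulNmx, mulmxA);
rewrite ?(u11, u12, u21, u22, v11, v12, v21, v22, w11, w12, w21, w22, z11, z12, z21, z22);
rewrite ?(rcancel u11, rcancel u12, rcancel u21, rcancel u22, rcancel v11, rcancel v12, rcancel v21, rcancel v22);
rewrite ?(rcancel w11, rcancel w12, rcancel w21, rcancel w22, rcancel z11, rcancel z12, rcancel z21, rcancel z22);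
rewrite ?(mulmx1, mul1mx, mulmx0, mul0mx, addr0, add0r, subr0, sub0r, oppr0);
by rewrite ?opprB ?subrK ?addKr.
Qed.
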